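(* If $n\ge 1$ is odd, then $a_{2(2)}(n)=b_2(2n+1,n+1)$. More generally, let $m,\ell\geq 2$ and let $n\ge1$ be not divisible by $\ell$, with $n=\ell k+r$ for integers $k$ and $1\leq r<\ell$. Then \[a_{m(\ell)}(n)=a_{(m-1)(\ell)}(2n+\ell-r,\,n+\ell-r).\]
   Context: An $\ell$-regular partition is a partition with no part divisible by $\ell$. $a_{m(\ell)}(n)$ is the number of $\ell$-regular partitions of $n$ in which the smallest part occurs at least $m$ times. $a_{m(\ell)}(N,j)$ is the number of $\ell$-regular partitions of $N$ in which the smallest part occurs at least $m$ times and the largest part minus the smallest part equals $j$. $b_\ell(N,j)$ is the number of $\ell$-regular partitions of $N$ in which the largest part minus the smallest part equals $j$. *)

(* Defs.v *)
(* Partitions of N are encoded by their multiplicity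
   functions: f i = number of times the part i occurs (0 <= i <= N). *)
From mathcomp Require Import all_boot.
Set Implicit Arguments. Unset Strict Implicit. Unset Printing Implicit Defensive.

Definition mpart (N : nat) := {ffun 'I_N.+1 -> 'I_N.+1}.

Definition is_partition (N : nat) (f : mpart N) : bool :=
  (f ord0 == 0 :> nat) && (\sum_(i < N.+1) i * f i == N).

Definition regular (l N : nat) (f : mpart N) : bool :=
  [forall i : 'I_N.+1, (0 < f i) ==> ~~ (l %| i)].

Definition is_smallest (N : nat) (f : mpart N) (s : 'I_N.+1) : bool :=
  (0 < f s) && [forall i : 'I_N.+1, (i < s) ==> (f i == 0 :> nat)].

Definition is_largest (N : nat) (f : mpart N) (t : 'I_N.+1) : bool :=
  (0 < f t) && [forall i : 'I_N.+1, (t < i) ==> (f i == 0 :> nat)].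

Definition smallest_mult_ge (m N : nat) (f : mpart N) : bool :=
  [exists s : 'I_N.+1, is_smallest f s && (m <= f s)].

Definition spread_eq (j N : nat) (f : mpart N) : bool :=
  [exists s : 'I_N.+1, exists t : 'I_N.+1,
     [&& is_smallest f s, is_largest f t & (t - s == j)]].

Definition a_ml (m l n : nat) : nat :=
  #|[set f : mpart n | [&& is_partition f, regular l f & smallest_mult_ge m f]]|.

Definition a_ml2 (m l N j : nat) : nat :=
  #|[set f : mpart N | [&& is_partition f, regular l f, smallest_mult_ge m f
                         & spread_eq j f]]|.

Definition b_l (l N j : nat) : nat :=
  #|[set f : mpart N | [&& is_partition f, regular l f & spread_eq j f]]|.

(* Main.v *)
Require Import Defs.
From mathcomp Require Import all_boot zify.
Set Implicit Arguments. Unset Strict Implicit. Unset Printing Implicit Defensive.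

Definition toF N (f : mpart N) (i : nat) : nat :=
  if i < N.+1 then nat_of_ord (f (inord i)) else 0.

Lemma toF_ord N (f : mpart N) (i : 'I_N.+1) : toF f i = f i.
Proof. by rewrite /toF ltn_ord inord_val. Qed.

Lemma toF_out N (f : mpart N) i : N < i -> toF f i = 0.
Proof. by move=> h; rewrite /toF ltnNge h. Qed.

Lemma toF_le N (f : mpart N) i : toF f i <= N.
Proof. by rewrite /toF; case: ifP => // _; exact: leq_ord. Qed.

Lemma toF_pos_le N (f : mpart N) i : 0 < toF f i -> i < N.+1.
Proof. by case: (leqP i N) => // /(toF_out f) ->. Qed.

Lemma ofF_eq N (G : nat -> nat) (f : mpart N) :
  (forall i, G i = toF f i) -> [ffun i : 'I_N.+1 => inord (G i)] = f :> mpart N.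
Proof. move=> h; apply/ffunP => i; rewrite ffunE h toF_ord; exact: inord_val. Qed.

Lemma toF_ofF N (G : nat -> nat) : (forall i, G i <= N) -> (forall i, N < i -> G i = 0) ->
  forall i, toF ([ffun i : 'I_N.+1 => inord (G i)] : mpart N) i = G i.
Proof.
move=> hb hs i; rewrite /toF; case: ifP => hi.
  by rewrite ffunE inordK ?inordK // ltnS hb.
by move/negbT: hi; rewrite -leqNgt => h; rewrite hs.
Qed.

Definition smF (F : nat -> nat) s := (0 < F s) /\ (forall i, i < s -> F i = 0).
Definition lgF (F : nat -> nat) t := (0 < F t) /\ (forall i, t < i -> F i = 0).

Lemma smF_uniq F a b : smF F a -> smF F b -> a = b.
Proof.
move=> [ha1 ha2] [hb1 hb2]; case: (ltngtP a b) => // h.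
  by rewrite hb2 in ha1.
by rewrite ha2 in hb1.
Qed.

Lemma is_smallestE N (f : mpart N) (s : 'I_N.+1) : is_smallest f s <-> smF (toF f) s.
Proof.
rewrite /is_smallest /smF toF_ord; split.
  case/andP => h1 /forallP h2; split => // i hi.
  have hiN : i < N.+1 by apply: ltn_trans hi (ltn_ord s).
  by move: (h2 (inord i)); rewrite inordK // hi /= => /eqP; rewrite /toF hiN.
case=> h1 h2; rewrite h1 /=; apply/forallP => i; apply/implyP => hi; apply/eqP.
by rewrite -toF_ord h2.
Qed.

Lemma is_largestE N (f : mpart N) (s : 'I_N.+1) : is_largest f s <-> lgF (toF f) s.
Proof.
rewrite /is_largest /lgF toF_ord; split.
  case/andP => h1 /forallP h2; split => // i hi.
  case: (leqP i N) => hiN; last by rewrite toF_out.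
  by move: (h2 (inord i)); rewrite inordK // hi /= => /eqP; rewrite /toF ltnS hiN.
case=> h1 h2; rewrite h1 /=; apply/forallP => i; apply/implyP => hi; apply/eqP.
by rewrite -toF_ord h2.
Qed.

Lemma smgeE m N (f : mpart N) :
  smallest_mult_ge m f <-> exists s, smF (toF f) s /\ m <= toF f s.
Proof.
split.
  case/existsP => s /andP[hs hm]; exists s; rewrite toF_ord; split => //.
  exact/is_smallestE.
case=> s [hs hm]; have hsN := toF_pos_le hs.1.
apply/existsP; exists (Ordinal hsN); apply/andP; split.
  exact/is_smallestE.
by rewrite -toF_ord.
Qed.

Lemma spreadE j N (f : mpart N) :
  spread_eq j f <-> exists s t, [/\ smF (toF f) s, lgF (toF f) t & t - s = j].
Proof.
split.
  case/existsP => s /existsP [t /and3P[hs ht /eqP hj]]; exists s, t.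
  by split => //; [exact/is_smallestE | exact/is_largestE].
case=> s [t [hs ht hj]]; have hsN := toF_pos_le hs.1; have htN := toF_pos_le ht.1.
apply/existsP; exists (Ordinal hsN); apply/existsP; exists (Ordinal htN).
apply/and3P; split; [exact/is_smallestE | exact/is_largestE | by apply/eqP].
Qed.

Lemma regularE l N (f : mpart N) :
  regular l f <-> forall i, 0 < toF f i -> ~~ (l %| i).
Proof.
split.
  move/forallP => h i hi; have hiN := toF_pos_le hi.
  by move: (h (Ordinal hiN)); rewrite -toF_ord /= hi.
by move=> h; apply/forallP => i; apply/implyP; rewrite -toF_ord; exact: h.
Qed.

Lemma partitionE N (f : mpart N) :
  is_partition f = (toF f 0 == 0) && (\sum_(i < N.+1) i * toF f i == N).
Proof.
rewrite /is_partition (eq_bigr (fun i : 'I_N.+1 => i * toF f i)).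
  by rewrite -(toF_ord f ord0).
by move=> i _; rewrite toF_ord.
Qed.

Lemma sum_widen (F : nat -> nat) M B : (forall i, M < i -> F i = 0) -> M < B ->
  \sum_(i < B) i * F i = \sum_(i < M.+1) i * F i.
Proof.
move=> h hB; rewrite (big_ord_widen B (fun i => i * F i) hB) [in RHS]big_mkcond /=.
apply: eq_bigr => i _; case: ifP => // /negbT; rewrite -leqNgt => hi.
by rewrite h ?muln0.
Qed.

Lemma sum_delta c B : c < B -> \sum_(i < B) i * (nat_of_ord i == c) = c.
Proof.
move=> hc; rewrite (bigD1 (Ordinal hc)) //= eqxx muln1 big1 ?addn0 // => i hi.
suff -> : (nat_of_ord i == c) = false by rewrite muln0.
apply/negbTE; apply: contra hi => /eqP hi; apply/eqP; exact: val_inj.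
Qed.

Lemma sum_shift (X Y : nat -> nat) a b B :
  (forall i, X i + (i == a) = Y i + (i == b)) -> a < B -> b < B ->
  \sum_(i < B) i * X i + a = \sum_(i < B) i * Y i + b.
Proof.
move=> h ha hb; rewrite -{1}(sum_delta ha) -(sum_delta hb) -!big_split /=.
by apply: eq_bigr => i _; rewrite -!mulnDr h.
Qed.

Lemma term_le (F : nat -> nat) B a : a < B -> a * F a <= \sum_(i < B) i * F i.
Proof. by move=> ha; rewrite (bigD1 (Ordinal ha)) //= leq_addr. Qed.

Lemma term2_le (F : nat -> nat) B a b : a < B -> b < B -> a != b ->
  a * F a + b * F b <= \sum_(i < B) i * F i.
Proof.
move=> ha hb hab; rewrite (bigD1 (Ordinal ha)) //= (bigD1 (Ordinal hb)) /=.
  by rewrite addnA leq_addr.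
by apply: contra hab => /eqP [->].
Qed.

Lemma card_bij (T1 T2 : finType) (A : {set T1}) (B : {set T2}) (phi : T1 -> T2) (psi : T2 -> T1) :
  {in A, forall f, phi f \in B} -> {in B, forall g, psi g \in A} ->
  {in A, cancel phi psi} -> {in B, cancel psi phi} -> #|A| = #|B|.
Proof.
move=> h1 h2 h3 h4; apply/eqP; rewrite eqn_leq; apply/andP; split.
  rewrite -(card_in_imset (can_in_inj h3)); apply: subset_leq_card.
  by apply/subsetP => x /imsetP [y hy ->]; exact: h1.
rewrite -(card_in_imset (can_in_inj h4)); apply: subset_leq_card.
by apply/subsetP => x /imsetP [y hy ->]; exact: h2.
Qed.

Definition smn N (f : mpart N) : nat :=
  if [pick s | is_smallest f s] is Some s then nat_of_ord s else 0.

Lemma smn_eq N (f : mpart N) s : smF (toF f) s -> smn f = s.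
Proof.
move=> hs; have hsN := toF_pos_le hs.1; rewrite /smn; case: pickP => [x hx | h].
  exact: smF_uniq (proj1 (is_smallestE f x) hx) hs.
by move: (h (Ordinal hsN)); rewrite (proj2 (is_smallestE f (Ordinal hsN)) hs).
Qed.

Lemma smF_ext F G s : (forall i, F i = G i) -> smF F s -> smF G s.
Proof. by move=> h [h1 h2]; split => [|i hi]; rewrite -h //; exact: h2. Qed.

Lemma lgF_ext F G s : (forall i, F i = G i) -> lgF F s -> lgF G s.
Proof. by move=> h [h1 h2]; split => [|i hi]; rewrite -h //; exact: h2. Qed.

Definition Phi (F : nat -> nat) s L i : nat := F i - (i == s) + (i == s + L).
Definition Psi (F : nat -> nat) s L i : nat := F i + (i == s) - (i == s + L).

Definition phi n L (f : mpart n) : mpart (n + L) :=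
  [ffun i : 'I_(n + L).+1 => inord (Phi (toF f) (smn f) L i)].
Definition psi n L (g : mpart (n + L)) : mpart n :=
  [ffun i : 'I_n.+1 => inord (Psi (toF g) (smn g) L i)].



Lemma fwd m l n L (f : mpart n) : 1 < m -> l %| L -> n < L ->
  [&& is_partition f, regular l f & smallest_mult_ge m f] ->
  [&& is_partition (phi L f), regular l (phi L f), smallest_mult_ge m.-1 (phi L f)
    & spread_eq L (phi L f)] /\ psi (phi L f) = f.
Proof.
move=> hm1 hlL hnL /and3P [hp hr hm].
move: hp; rewrite partitionE => /andP [/eqP hF0 /eqP hsum].
move/regularE: hr => hr; move/smgeE: hm => [s [hs hms]].
have hsn := smn_eq hs.
have hsN := toF_pos_le hs.1.
have hs0 : 0 < s by case: s hs hsN {hsn hms} => // [[]]; rewrite hF0.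
have hFs2 : 2 <= toF f s by lia.
have hparts : forall p, 0 < toF f p -> p + s <= n.
  move=> p hp; have hpn := toF_pos_le hp.
  case: (eqVneq p s) => [->|hne].
    have := term_le (toF f) hsN; rewrite hsum; nia.
  have := term2_le (toF f) hpn hsN hne; rewrite hsum; nia.
set F := toF f in hF0 hsum hr hs hms hsN hFs2 hparts *.
set F' := Phi F s L.
have hF'b : forall i, F' i <= n + L.
  move=> i; rewrite /F' /Phi; have := toF_le f i; rewrite -/F.
  case: (_ == _); case: (_ == _) => /=; lia.
have hF's : forall i, n + L < i -> F' i = 0.
  move=> i hi; rewrite /F' /Phi /F toF_out; last by lia.
  have -> : (i == s) = false by apply/eqP; lia.
  by have -> : (i == s + L) = false by apply/eqP; lia.
have hT : forall i, toF (phi L f) i = F' i.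
  by move=> i; rewrite /phi hsn; exact: toF_ofF.
have hkey : forall i, F' i + (i == s) = F i + (i == s + L).
  move=> i; rewrite /F' /Phi.
  case: (i =P s) => [->|ne]; case: (i =P s + L) => /=; lia.
have hsumB : \sum_(i < (n + L).+1) i * F i = n.
  by rewrite (sum_widen (M:=n)) // => [i hi|]; [exact: toF_out | lia].
have hsum' : \sum_(i < (n + L).+1) i * F' i = n + L.
  have := sum_shift hkey (_ : s < (n + L).+1) (_ : s + L < (n + L).+1).
  rewrite hsumB; lia.
have hsm' : smF F' s.
  split; first by rewrite /F' /Phi eqxx; case: (s =P s + L) => /=; lia.
  move=> i hi; rewrite /F' /Phi hs.2 //.
  by case: (i =P s); case: (i =P s + L) => /=; lia.
have hsmT : smF (toF (phi L f)) s by apply: smF_ext hsm' => i; rewrite hT.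
split.
  apply/and4P; split.
  - rewrite partitionE; apply/andP; split; apply/eqP.
      rewrite hT /F' /Phi hF0.
      by case: (0 =P s); case: (0 =P s + L) => /=; lia.
    rewrite (eq_bigr (fun i : 'I_(n + L).+1 => i * F' i)) //.
    by move=> i _; rewrite hT.
  - apply/regularE => i; rewrite hT /F' /Phi.
    case: (i =P s + L) => [->|ne] /=.
      by move=> _; rewrite dvdn_addl //; apply: hr; exact: hs.1.
    move=> hi; apply: hr; move: hi; case: (i == s) => /=; lia.
  - apply/smgeE; exists s; split => //; rewrite hT /F' /Phi eqxx.
    by case: (s =P s + L) => /=; lia.
  - apply/spreadE; exists s, (s + L); split => //; last by lia.
    apply: lgF_ext (fun i => esym (hT i)) _.
    split; first by rewrite /F' /Phi eqxx; lia.
    move=> i hi; rewrite /F' /Phi.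
    have -> : F i = 0.
      case: (posnP (F i)) => // hpos; have := hparts _ hpos; lia.
    by case: (i =P s); case: (i =P s + L) => /=; lia.
rewrite /psi (smn_eq hsmT); apply: ofF_eq => i.
rewrite /Psi hT /F' /Phi -/F.
by case: (i =P s) => [->|ne]; case: (i =P s + L) => /=; lia.
Qed.

Lemma bwd m l n L (g : mpart (n + L)) : 1 < m -> l %| L -> n < L ->
  [&& is_partition g, regular l g, smallest_mult_ge m.-1 g & spread_eq L g] ->
  [&& is_partition (psi g), regular l (psi g) & smallest_mult_ge m (psi g)]
  /\ phi L (psi g) = g.
Proof.
move=> hm1 hlL hnL /and4P [hp hr hm hsp].
move: hp; rewrite partitionE => /andP [/eqP hG0 /eqP hsum].
move/regularE: hr => hr; move/smgeE: hm => [s' [hs' hms]].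
move/spreadE: hsp => [s [t [hs ht hts]]].
have ess := smF_uniq hs' hs; subst s'; clear hs'.
have htE : t = s + L by lia.
subst t.
have hsn := smn_eq hs.
have hsN := toF_pos_le hs.1.
have htN := toF_pos_le ht.1.
have hs0 : 0 < s by case: s hs hsN htN hts {hsn hms ht} => // [[]]; rewrite hG0.
set G := toF g in hG0 hsum hr hs hms ht hsN htN *.
set F := Psi G s L.
have hkey : forall i, F i + (i == s + L) = G i + (i == s).
  move=> i; rewrite /F /Psi; have := ht.1.
  case: (i =P s + L) => [->|ne]; case: (_ =P s) => /=; lia.
have hsumF : \sum_(i < (n + L).+1) i * F i = n.
  have := sum_shift hkey htN hsN; rewrite hsum; lia.
have hFs : forall i, n < i -> F i = 0.
  move=> i hi; case: (leqP i (n + L)) => hiN.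
    have := term_le F (_ : i < (n + L).+1); rewrite hsumF => /(_ ltac:(lia)); nia.
  rewrite /F /Psi /G toF_out //.
  by case: (i =P s); case: (i =P s + L) => /=; lia.
have hFb : forall i, F i <= n.
  move=> i; case: (leqP i n) => hin; last by rewrite hFs.
  case: (posnP i) => [->|hi0].
    by rewrite /F /Psi hG0; case: (0 =P s); case: (0 =P s + L) => /=; lia.
  have := term_le F (_ : i < (n + L).+1); rewrite hsumF => /(_ ltac:(lia)); nia.
have hT : forall i, toF (psi g) i = F i.
  by move=> i; rewrite /psi hsn; exact: toF_ofF.
have hsm : smF F s.
  split; first by rewrite /F /Psi eqxx; case: (s =P s + L) => /=; lia.
  move=> i hi; rewrite /F /Psi hs.2 //.
  by case: (i =P s); case: (i =P s + L) => /=; lia.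
have hsmT : smF (toF (psi g)) s by apply: smF_ext hsm => i; rewrite hT.
split.
  apply/and3P; split.
  - rewrite partitionE; apply/andP; split; apply/eqP.
      by rewrite hT /F /Psi hG0; case: (0 =P s); case: (0 =P s + L) => /=; lia.
    rewrite (eq_bigr (fun i : 'I_n.+1 => i * F i)); last by move=> i _; rewrite hT.
    by rewrite -(sum_widen (B := (n + L).+1) hFs) //; lia.
  - apply/regularE => i; rewrite hT /F /Psi.
    case: (i =P s) => [->|ne] /=.
      by move=> _; apply: hr; exact: hs.1.
    move=> hi; apply: hr; move: hi; case: (i == s + L) => /=; lia.
  - apply/smgeE; exists s; split => //; rewrite hT /F /Psi eqxx.
    by case: (s =P s + L) => /=; lia.
rewrite /phi (smn_eq hsmT); apply: ofF_eq => i.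
rewrite /Phi hT /F /Psi -/G; have := ht.1.
case: (i =P s) => [->|ne]; [case: (s =P s + L) | case: (i =P s + L) => [->|ne2]] => /=; lia.
Qed.

Lemma core2 m l n L : 1 < m -> l %| L -> n < L ->
  a_ml m l n = a_ml2 m.-1 l (n + L) L.
Proof.
move=> hm1 hlL hnL; rewrite /a_ml /a_ml2.
apply: (card_bij (phi:=@phi n L) (psi:=@psi n L)) => x; rewrite !inE => hx.
- by case: (fwd hm1 hlL hnL hx).
- by case: (bwd hm1 hlL hnL hx).
- by case: (fwd hm1 hlL hnL hx).
- by case: (bwd hm1 hlL hnL hx).
Qed.

Lemma a_ml2_1 l N j : a_ml2 1 l N j = b_l l N j.
Proof.
rewrite /a_ml2 /b_l; apply: eq_card => f; rewrite !inE.
case: (is_partition f) => //=; case: (regular l f) => //=.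
case hs: (spread_eq j f); rewrite ?andbF ?andbT //.
move/spreadE: hs => [s [t [hs _ _]]]; apply/smgeE; exists s; split => //; exact: hs.1.
Qed.

Theorem theorem5p6 :
  (forall n : nat, 1 <= n -> odd n -> a_ml 2 2 n = b_l 2 (2 * n + 1) (n + 1))
  /\
  (forall m l n k r : nat, 2 <= m -> 2 <= l -> 1 <= n -> ~~ (l %| n) ->
     n = l * k + r -> 1 <= r < l ->
     a_ml m l n = a_ml2 (m - 1) l (2 * n + l - r) (n + l - r)).
Proof.
have P2 : forall m l n k r : nat, 2 <= m -> 2 <= l -> 1 <= n -> ~~ (l %| n) ->
     n = l * k + r -> 1 <= r < l ->
     a_ml m l n = a_ml2 (m - 1) l (2 * n + l - r) (n + l - r).
  move=> m l n k r hm hl hn _ hnk /andP [hr1 hr2].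
  have -> : 2 * n + l - r = n + (n + l - r) by lia.
  rewrite subn1; apply: core2 => //; last by lia.
  by apply/dvdnP; exists k.+1; lia.
split => // n hn hodd.
rewrite (P2 2 2 n n./2 1) //.
- have -> : 2 * n + 2 - 1 = 2 * n + 1 by lia.
  have -> : n + 2 - 1 = n + 1 by lia.
  exact: a_ml2_1.
- by rewrite dvdn2 hodd.
- by rewrite -{1}(odd_double_half n) hodd -mul2n addnC.
Qed.
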